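(* Let $n,k\ge 1$ and let $\varphi$ be a tame automorphism of $\mathbf{C}[x_1,\dots,x_{n+k}]$. Partition the indices $\{1,\dots,n+k\}$ into $\{i_1,\dots,i_n\}$ and $\{j_1,\dots,j_k\}$. For polynomials $q_1,\dots,q_k\in\mathbf{C}[x_{i_1},\dots,x_{i_n}]$, let $\varphi_{q_1,\dots,q_k}$ be the $\mathbf{C}$-algebra endomorphism of $\mathbf{C}[x_{i_1},\dots,x_{i_n}]$ sending each $x_{i_l}$ ($1\le l\le n$) to the polynomial obtained from $\varphi(x_{i_l})$ by substituting $q_m$ for $x_{j_m}$, $1\le m\le k$. Then there exist polynomials $q_1,\dots,q_k\in\mathbf{C}[x_{i_1},\dots,x_{i_n}]$ such that $\varphi_{q_1,\dots,q_k}$ is injective.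
   Context: An automorphism of $\mathbf{C}[x_1,\dots,x_N]$ is elementary if it fixes all variables except one, $x_i$, and maps $x_i$ to $x_i + f(x_1,\dots,x_{i-1},x_{i+1},\dots,x_N)$; it is tame if it is a composition of elementary and linear automorphisms. *)

(* Defs.v *)
From HB Require Import structures.
From mathcomp Require Import all_boot all_order all_algebra all_fingroup.
From mathcomp Require Import reals.
From mathcomp Require Import complex.
From mathcomp Require Import mpoly.
Set Implicit Arguments. Unset Strict Implicit. Unset Printing Implicit Defensive.
Import GRing.Theory Num.Theory.
Local Open Scope ring_scope.

(* An endomorphism of K[x_0..x_{N-1}] is represented by the N-tuple of
   images of the variables; it acts by p |-> p \mPo f (comp_mpoly f p). *)
Notation endo K N := (N.-tuple {mpoly K[N]}).

Definition endo_id (K : comRingType) (N : nat) : endo K N :=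
  [tuple 'X_i | i < N].

Definition endo_comp (K : comRingType) (N : nat) (phi psi : endo K N) : endo K N :=
  [tuple comp_mpoly phi (tnth psi i) | i < N].

Definition elementary (K : comRingType) (N : nat) (e : endo K N) : Prop :=
  exists (i : 'I_N) (f : {mpoly K[N]}),
    (forall m, m \in msupp f -> m i = 0%N) /\
    forall j : 'I_N, tnth e j = (if j == i then 'X_i + f else 'X_j).

Definition linear_aut (K : comUnitRingType) (N : nat) (e : endo K N) : Prop :=
  exists A : 'M[K]_N, A \in unitmx /\
    forall i : 'I_N, tnth e i = \sum_(j < N) A i j *: 'X_j.

Inductive tame (K : comUnitRingType) (N : nat) : endo K N -> Prop :=
  | tame_id : tame (endo_id K N)
  | tame_elem e phi : elementary e -> tame phi -> tame (endo_comp e phi)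
  | tame_lin e phi : linear_aut e -> tame phi -> tame (endo_comp e phi).

(* Given an ordered partition of {0..n+k-1} into (i_1..i_n) = sigma (lshift l)
   and (j_1..j_k) = sigma (rshift m), and q : 'I_k -> K[y_1..y_n]
   (y_l standing for x_{i_l}), the substitution sending x_{i_l} to y_l and
   x_{j_m} to q_m. *)
Definition subst_tuple (K : comRingType) (n k : nat) (sigma : 'S_(n + k))
  (q : 'I_k -> {mpoly K[n]}) : (n + k).-tuple {mpoly K[n]} :=
  [tuple match split ((sigma^-1)%g i) with
         | inl l => 'X_l
         | inr m => q m
         end | i < n + k].

Definition restricted_endo (K : comRingType) (n k : nat) (sigma : 'S_(n + k))
  (phi : endo K (n + k)) (q : 'I_k -> {mpoly K[n]}) : endo K n :=
  [tuple comp_mpoly (subst_tuple sigma q) (tnth phi (sigma (lshift k l))) | l < n].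

(* Main.v *)
Require Import Defs.
From HB Require Import structures.
From mathcomp Require Import all_boot all_order all_algebra all_fingroup.
From mathcomp Require Import reals complex mpoly.
Local Open Scope ring_scope.

Module Helpers.
Set Implicit Arguments. Unset Strict Implicit. Unset Printing Implicit Defensive.
Import GRing.Theory Num.Theory.

Lemma mderivXU (R : nzRingType) n (i l : 'I_n) :
  ('X_i : {mpoly R[n]})^`M(l) = (i == l)%:R.
Proof.
rewrite mderivX mnm1E; case: eqP => [<-|_]; last by rewrite scale0r.
rewrite scale1r; have -> : (U_(i) - U_(i) = 0)%MM by apply/mnmP => j; rewrite mnmBE subnn mnm0E.
by rewrite mpolyX0.
Qed.

Section Chain.
Variables (K : comNzRingType) (N M : nat) (t : N.-tuple {mpoly K[M]}).

Definition chainP (p : {mpoly K[N]}) := forall j : 'I_M,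
  (p \mPo t)^`M(j) = \sum_(i < N) ((p^`M(i)) \mPo t) * (tnth t i)^`M(j).

Lemma chainP_add p q : chainP p -> chainP q -> chainP (p + q).
Proof.
move=> hp hq j; rewrite comp_mpolyD mderivD hp hq -big_split /=.
by apply: eq_bigr => i _; rewrite mderivD comp_mpolyD mulrDl.
Qed.

Lemma chainP_scale c p : chainP p -> chainP (c *: p).
Proof.
move=> hp j; rewrite comp_mpolyZ mderivZ hp scaler_sumr /=.
by apply: eq_bigr => i _; rewrite mderivZ comp_mpolyZ scalerAl.
Qed.

Lemma chainP_mul p q : chainP p -> chainP q -> chainP (p * q).
Proof.
move=> hp hq j; rewrite rmorphM /= mderivM hp hq mulr_suml mulr_sumr -big_split /=.
apply: eq_bigr => i _; rewrite mderivM rmorphD !rmorphM /=.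
by rewrite mulrDl -!mulrA; congr (_ * _ + _); rewrite mulrC.
Qed.

Lemma chainP1 : chainP 1.
Proof.
move=> j; rewrite rmorph1 /= mderivC big1 // => i _.
by rewrite mderivC comp_mpoly0 mul0r.
Qed.

Lemma chainPX (i : 'I_N) : chainP 'X_i.
Proof.
move=> j; rewrite comp_mpolyXU -tnth_nth (bigD1 i) //= big1 => [|l nl].
  by rewrite mderivXU eqxx comp_mpoly1 mul1r addr0.
by rewrite mderivXU eq_sym (negbTE nl) comp_mpoly0 mul0r.
Qed.

Lemma chainPXm m : chainP 'X_[m].
Proof.
rewrite mpolyXE_id; elim/big_rec: _ => [|i p _ hp]; first exact: chainP1.
apply: chainP_mul => //; elim: (m i) => [|k ih]; first by rewrite expr0; exact: chainP1.
by rewrite exprS; apply: chainP_mul => //; exact: chainPX.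
Qed.

Lemma chain_rule p : chainP p.
Proof.
elim/mpolyind: p => [j|c m p _ _ hp].
  by rewrite comp_mpoly0 mderiv0 big1 // => i _; rewrite mderiv0 comp_mpoly0 mul0r.
by apply: chainP_add => //; apply: chainP_scale; exact: chainPXm.
Qed.
End Chain.

Definition jac (K : nzRingType) (N M : nat) (t : N.-tuple {mpoly K[M]}) :
  'M[{mpoly K[M]}]_(N, M) := \matrix_(i, j) (tnth t i)^`M(j).

Lemma msize_deriv (K : nzRingType) n (p : {mpoly K[n]}) i :
  (mmeasure mdeg (p^`M(i)) <= (mmeasure mdeg p).-1)%N.
Proof.
rewrite [X in (X <= _)%N]msizeE; apply/bigmax_leqP_seq => m hm _.
rewrite mcoeff_msupp mcoeff_mderiv in hm.
have hm' : (m + U_(i))%MM \in msupp p.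
  by rewrite mcoeff_msupp; apply: contraNneq hm => ->; rewrite mul0rn.
have := msize_mdeg_lt hm'; rewrite mdegD mdeg1 addn1.
by case: (mmeasure mdeg p) => // k; rewrite ltnS.
Qed.

Lemma mnm_neq0 n (m : 'X_{1..n}) : m != 0%MM -> exists i, (0 < m i)%N.
Proof.
move=> h; apply/existsP; apply: contraNT h => /existsPn h.
by apply/eqP/mnmP => i; rewrite mnm0E; move: (h i); rewrite lt0n negbK => /eqP.
Qed.

Lemma deriv0_const (K : numDomainType) n (p : {mpoly K[n]}) :
  (forall i, p^`M(i) = 0) -> p = (p@_0)%:MP.
Proof.
move=> h; apply/mpolyP => m; rewrite mcoeffC.
have [->|nz] := eqVneq m 0%MM; first by rewrite mulr1.
rewrite mulr0; have [i hi] := mnm_neq0 nz.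
have em : m = ((m - U_(i)) + U_(i))%MM.
  apply/mnmP => j; rewrite mnmDE mnmBE mnm1E.
  by case: eqP => [<-|_]; [rewrite subnK | rewrite subn0 addn0].
have := congr1 (fun q => q@_(m - U_(i))%MM) (h i).
rewrite mcoeff_mderiv -em mcoeff0 => /eqP; rewrite mulrn_eq0 /=.
by move/eqP.
Qed.

Section JacCrit.
Variables (K : numDomainType) (n : nat) (t : n.-tuple {mpoly K[n]}).
Hypothesis hdet : \det (jac t) != 0.

Lemma jac_kernel b (p : {mpoly K[n]}) :
  (mmeasure mdeg p <= b)%N -> p \mPo t = 0 -> p = 0.
Proof.
elim: b p => [|b ih] p hb hp.
  by apply/eqP; rewrite -msize_poly_eq0 -leqn0.
have hd : forall i, p^`M(i) = 0.
  have hv : forall i, (p^`M(i)) \mPo t = 0.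
    pose v := \row_i ((p^`M(i)) \mPo t).
    have v0 : v *m jac t = 0.
      apply/matrixP => a j; rewrite mxE [RHS]mxE.
      transitivity ((p \mPo t)^`M(j)); last by rewrite hp mderiv0.
      by rewrite chain_rule; apply: eq_bigr => i _; rewrite !mxE.
    have := congr1 (fun A => A *m \adj (jac t)) v0.
    rewrite -mulmxA mul_mx_adj mul0mx mul_mx_scalar => e i.
    have := congr1 (fun A : 'M[_]_(1, n) => A ord0 i) e; rewrite !mxE => /eqP.
    by rewrite mulf_eq0 (negbTE hdet) /= => /eqP.
  move=> i; apply: ih (hv i); apply: leq_trans (msize_deriv p i) _.
  by rewrite -ltnS; case: (mmeasure mdeg p) hb => //= k; rewrite ltnS.
move: hp; rewrite (deriv0_const hd) comp_mpolyC => /eqP.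
by rewrite !mpolyC_eq0 => /eqP ->.
Qed.

Lemma jacobian_inj : injective (comp_mpoly t).
Proof.
move=> p q e; apply/eqP; rewrite -subr_eq0; apply/eqP.
by apply: (@jac_kernel (mmeasure mdeg (p - q))) => //; rewrite comp_mpolyB e subrr.
Qed.
End JacCrit.

Section Tame.
Variables (K : numFieldType) (N : nat).

Lemma unitmx_map (M : nat) (f : {rmorphism {mpoly K[N]} -> {mpoly K[M]}}) (A : 'M_N) :
  A \in unitmx -> map_mx f A \in unitmx.
Proof. by rewrite !unitmxE det_map_mx; apply: rmorph_unit. Qed.

Lemma jac_comp (e phi : endo K N) :
  jac (endo_comp e phi) = map_mx (comp_mpoly e) (jac phi) *m jac e.
Proof.
apply/matrixP => i j; rewrite !mxE tnth_mktuple chain_rule.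
by apply: eq_bigr => l _; rewrite !mxE.
Qed.

Lemma jac_id : jac (endo_id K N) = 1%:M.
Proof. by apply/matrixP => i j; rewrite !mxE tnth_mktuple mderivXU. Qed.

Lemma jac_elem (e : endo K N) : elementary e -> jac e \in unitmx.
Proof.
case=> i [f [hf he]].
have fi : f^`M(i) = 0.
  apply/mpolyP => m; rewrite mcoeff_mderiv mcoeff0.
  case: (boolP ((m + U_(i))%MM \in msupp f)) => [/hf|/memN_msupp_eq0 ->]; last by rewrite mul0rn.
  by rewrite mnmDE mnm1E eqxx addn1.
pose W : 'M[{mpoly K[N]}]_N := \matrix_(a, b) (if a == i then f^`M(b) else 0).
have eJ : jac e = 1%:M + W.
  apply/matrixP => a b; rewrite !mxE he.
  by case: eqP => [->|_]; rewrite ?mderivD mderivXU ?addr0.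
have WW : W *m W = 0.
  apply/matrixP => a b; rewrite !mxE (bigD1 i) //= big1 => [|c nc].
    by rewrite !mxE eqxx fi if_same mul0r addr0.
  by rewrite [W c b]mxE (negbTE nc) mulr0.
have : jac e *m (1%:M - W) = 1%:M.
  by rewrite eJ mulmxDl mulmxBr mul1mx mulmxBr mulmx1 WW subr0 mul1mx subrK.
by case/mulmx1_unit.
Qed.

Lemma jac_lin (e : endo K N) : linear_aut e -> jac e \in unitmx.
Proof.
case=> A [hA he].
have -> : jac e = map_mx (@mpolyC N K) A.
  apply/matrixP => a b; rewrite !mxE he raddf_sum /=.
  rewrite (eq_bigr (fun j => A a j *: ((j == b)%:R))) => [|j _]; last first.
    by rewrite mderivZ mderivXU.
  rewrite (bigD1 b) //= big1 => [|j nj]; last by rewrite (negbTE nj) scaler0.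
  by rewrite eqxx addr0 -mul_mpolyC mulr1.
by rewrite unitmxE det_map_mx; apply: rmorph_unit; rewrite -unitmxE.
Qed.

Lemma tame_jac (phi : endo K N) : tame phi -> jac phi \in unitmx.
Proof.
elim=> [|e p he _ ih|e p he _ ih]; first by rewrite jac_id unitmx1.
  by rewrite jac_comp unitmx_mul (jac_elem he) andbT; apply: unitmx_map.
by rewrite jac_comp unitmx_mul (jac_lin he) andbT; apply: unitmx_map.
Qed.
End Tame.

Lemma poly_nat_nonroot (F : numDomainType) (p : {poly F}) :
  p != 0 -> exists m : nat, p.[m%:R] != 0.
Proof.
move=> p0; pose rs : seq F := [seq i%:R | i <- iota 0 (size p)].
have u : uniq rs.
  by rewrite map_inj_uniq ?iota_uniq // => a b /eqP; rewrite eqr_nat => /eqP.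
have : ~~ all (root p) rs.
  apply/negP => h; have := max_poly_roots p0 h u.
  by rewrite size_map size_iota ltnn.
by case/allPn => x /mapP [i _ ->] hx; exists i.
Qed.

Lemma eval_mx_poly (F : comNzRingType) n (A : 'M[{poly F}]_n) x :
  \det (map_mx (horner_eval x) A) = (\det A).[x].
Proof. by rewrite det_map_mx. Qed.

Lemma exists_lin_C (F : numFieldType) n k (P : 'M[F]_(n + k)) :
  P \in unitmx -> exists C : 'M[F]_(k, n), (ulsubmx P + ursubmx P *m C) \in unitmx.
Proof.
move=> hP; set Q := invmx P.
set M1 := ulsubmx P; set M2 := ursubmx P; set N1 := ulsubmx Q; set N2 := dlsubmx Q.
have hMN : M1 *m N1 + M2 *m N2 = 1%:M.
  have := congr1 ulsubmx (mulmxV hP : P *m Q = 1%:M); rewrite -{1}[P]submxK -[Q]submxK.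
  by rewrite mulmx_block block_mxKul (scalar_mx_block n k) block_mxKul.
pose p1 : {poly F} := \det (1%:M + 'X *: map_mx polyC N1).
pose p2 : {poly F} := char_poly (- M1).
have e1 x : p1.[x] = \det (1%:M + x *: N1).
  rewrite -eval_mx_poly; congr (\det _); apply/matrixP => a b.
  by rewrite !mxE /= horner_evalE hornerD mulrC hornerMX hornerC; case: (a == b); rewrite ?hornerC ?horner0 ?hornerC mulrC.
have e2 x : p2.[x] = \det (x%:M + M1).
  rewrite -eval_mx_poly; congr (\det _); apply/matrixP => a b.
  by rewrite !mxE /= horner_evalE hornerD hornerN hornerC hornerMn hornerX opprK.
have p10 : p1 != 0 by apply/eqP => h; have := e1 0; rewrite h horner0 scale0r addr0 det1 => /eqP; rewrite eq_sym oner_eq0.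
have p20 : p2 != 0 by apply: monic_neq0; exact: char_poly_monic.
have [m hm] := poly_nat_nonroot (mulf_neq0 p10 p20).
set x : F := m%:R in hm; rewrite hornerM mulf_eq0 negb_or e1 e2 in hm.
case/andP: hm => h1 h2.
have u1 : (1%:M + x *: N1) \in unitmx by rewrite unitmxE unitfE.
have u2 : (x%:M + M1) \in unitmx by rewrite unitmxE unitfE.
exists (x *: N2 *m invmx (1%:M + x *: N1)).
have -> : M1 + M2 *m (x *: N2 *m invmx (1%:M + x *: N1)) = (x%:M + M1) *m invmx (1%:M + x *: N1).
  apply: (canRL (mulmxK u1)).
  rewrite mulmxDl mulmxDr mulmx1 -[M2 *m _ *m _]mulmxA mulmxKV // -!scalemxAr -addrA -scalerDr hMN scalemx1 addrC; last by [].
by rewrite unitmx_mul u2 unitmx_inv.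
Qed.

Lemma split_l n k (a : 'I_n) : split (lshift k a) = inl a.
Proof. exact: (unsplitK (inl _ a)). Qed.
Lemma split_r n k (a : 'I_k) : split (rshift n a) = inr a.
Proof. exact: (unsplitK (inr _ a)). Qed.

Lemma unitmx_rmorph (R S : comUnitRingType) (f : {rmorphism R -> S}) m (A : 'M[R]_m) :
  A \in unitmx -> map_mx f A \in unitmx.
Proof. by rewrite !unitmxE det_map_mx; apply: rmorph_unit. Qed.

Theorem main_gen (K : numFieldType) (n k : nat) (phi : endo K (n + k)) (hphi : tame phi)
  (sigma : 'S_(n + k)) :
  exists q : 'I_k -> {mpoly K[n]}, injective (comp_mpoly (restricted_endo sigma phi q)).
Proof.
pose z : 'I_(n + k) -> K := fun _ => 0.
pose z' : 'I_n -> K := fun _ => 0.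
pose P0 := map_mx (meval z) (jac phi).
have uP0 : P0 \in unitmx by apply: unitmx_rmorph; exact: tame_jac.
pose P : 'M[K]_(n + k) := \matrix_(a, b) P0 (sigma a) (sigma b).
have uP : P \in unitmx.
  have -> : P = col_perm sigma (row_perm sigma P0) by apply/matrixP => a b; rewrite !mxE.
  by rewrite col_permE row_permE !unitmx_mul !unitmx_perm uP0.
have [C hC] := exists_lin_C uP.
pose q (m : 'I_k) : {mpoly K[n]} := \sum_(l < n) C m l *: 'X_l.
exists q; apply: jacobian_inj.
set s := subst_tuple sigma q.
have hs i : (tnth s i).@[z'] = 0.
  rewrite tnth_mktuple; case: split => [l|m]; first by rewrite mevalXU.
  by rewrite rmorph_sum big1 // => l _ /=; rewrite mevalZ mevalXU mulr0.
have hcomp p : (p \mPo s).@[z'] = p.@[z].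
  by rewrite comp_mpoly_meval; apply: meval_eq => i; rewrite hs.
have claim : map_mx (meval z') (jac (restricted_endo sigma phi q)) =
             ulsubmx P + ursubmx P *m C.
  apply/matrixP => l j; rewrite !mxE tnth_mktuple chain_rule rmorph_sum /=.
  rewrite (reindex_inj (@perm_inj _ sigma)) /= big_split_ord /=.
  congr (_ + _).
    rewrite (bigD1 j) //= big1 => [|a na].
      rewrite rmorphM /= hcomp tnth_mktuple permK split_l mderivXU eqxx rmorph1 mulr1.
      by rewrite addr0.
    rewrite rmorphM /= tnth_mktuple permK split_l mderivXU (negbTE na).
    by rewrite rmorph0 mulr0.
  apply: eq_bigr => m _.
  rewrite rmorphM /= hcomp tnth_mktuple permK split_r !mxE.
  congr (_ * _).
  rewrite /q (big_morph (mderiv j) (mderivD j) (mderiv0 _ j)) rmorph_sum /= (bigD1 j) //= big1 => [|a na].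
    by rewrite mderivZ mderivXU eqxx mevalZ meval1 mulr1 addr0.
  by rewrite mderivZ mderivXU (negbTE na) mevalZ meval0 mulr0.
apply/eqP => h; move: hC; rewrite -claim unitmxE det_map_mx h rmorph0.
by rewrite unitr0.
Qed.
End Helpers.

Theorem proposition2p4 (R : realType) (n k : nat) (hn : (1 <= n)%N) (hk : (1 <= k)%N)
  (phi : endo R[i] (n + k)) (hphi : tame phi) (sigma : 'S_(n + k)) :
  exists q : 'I_k -> {mpoly R[i][n]},
    injective (comp_mpoly (restricted_endo sigma phi q)).
Proof. exact: (Helpers.main_gen hphi sigma). Qed.
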